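(* Let $a_0=0$ and let $a_1<a_2<a_3<\cdots$ be the increasing enumeration of $\mathcal{A}=\{m\ge1:\ c_m=1\}$. Let $(b_n)_{n\ge0}$ be defined by $b_0=0$, $b_{2n}=4b_n$, $b_{2n+1}=4b_n+2$. Then for every integer $k\ge 0$ and every $r\in\{-1,0,1,2\}$ with $4k+r\ge 0$, $$a_{4k+r}=4b_k+r.$$
   Context: For $n\in\mathbb{N}$ let $s_2(n)$ be the sum of the binary digits of $n$ and $t_n=s_2(n)\bmod 2$ (the Prouhet–Thue–Morse sequence). Let $F(X)=\sum_{n\ge1}t_nX^n\in\mathbb{F}_2[[X]]$ and let $G(X)=\sum_{n\ge1}c_nX^n\in\mathbb{F}_2[[X]]$ be its compositional inverse, i.e. $F(G(X))=G(F(X))=X$. The $c_n$ are identified with integers in $\{0,1\}$. Note that $b_n$ is the integer whose base-4 expansion is obtained from the binary expansion of $n$ by replacing each digit $1$ by $2$. *)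

(* Defs.v *)
From HB Require Import structures.
From mathcomp Require Import all_boot all_order all_algebra.
Set Implicit Arguments. Unset Strict Implicit. Unset Printing Implicit Defensive.
Import Order.TTheory GRing.Theory Num.Theory.

(* s_2(n): sum of binary digits of n (bits i < n suffice since n < 2^n). *)
Definition s2 (n : nat) : nat := \sum_(i < n) (n %/ 2 ^ i %% 2).

Definition tm (n : nat) : nat := s2 n %% 2.

Local Open Scope ring_scope.

Definition Ftrunc (N : nat) : {poly 'F_2} := \poly_(i < N) (tm i)%:R.

Definition ser_trunc (c : nat -> 'F_2) (N : nat) : {poly 'F_2} := \poly_(i < N) c i.

(* G = sum_{n>=1} c_n X^n is the compositional inverse of F in F_2[[X]]:
   c_0 = 0 and F(G(X)) = G(F(X)) = X.  Since F and G have no constant term,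
   the n-th coefficient of F(G(X)) is that of the composition of the
   truncations to degree <= n. *)
Definition is_comp_inverse (c : nat -> 'F_2) : Prop :=
  c 0%N = 0 /\
  (forall n : nat, (Ftrunc n.+1 \Po ser_trunc c n.+1)`_n = (n == 1%N)%:R) /\
  (forall n : nat, (ser_trunc c n.+1 \Po Ftrunc n.+1)`_n = (n == 1%N)%:R).

(* a_j = m, where a_0 = 0 and a_1 < a_2 < ... enumerates A = {m >= 1 : c_m = 1}:
   for j >= 1, m is in A and exactly j-1 elements of A are smaller than m. *)
Definition enum_at (c : nat -> 'F_2) (j m : nat) : Prop :=
  if j == 0%N then m = 0%N
  else [/\ (1 <= m)%N, c m = 1 &
        #|[set i : 'I_m | (1 <= (i : nat))%N && (c i == 1)]| = j.-1].

(* Main.v *)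
Require Import Defs.
From HB Require Import structures.
From mathcomp Require Import all_boot all_order all_algebra.
From mathcomp Require Import ring zify.
Import Order.TTheory GRing.Theory Num.Theory.
Set Implicit Arguments. Unset Strict Implicit. Unset Printing Implicit Defensive.
Local Open Scope ring_scope.

Notation P2 := {poly 'F_2}.

Definition eqm (N : nat) (p q : P2) := forall i, (i < N)%N -> p`_i = q`_i.

Lemma eqm_refl N p : eqm N p p. Proof. by []. Qed.
Lemma eqm_sym N p q : eqm N p q -> eqm N q p.
Proof. by move=> h i hi; rewrite h. Qed.
Lemma eqm_trans N p q r : eqm N p q -> eqm N q r -> eqm N p r.
Proof. by move=> h1 h2 i hi; rewrite h1 ?h2. Qed.
Lemma eqmD N p q p' q' : eqm N p p' -> eqm N q q' -> eqm N (p + q) (p' + q').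
Proof. by move=> h1 h2 i hi; rewrite !coefD h1 ?h2. Qed.
Lemma eqmN N p p' : eqm N p p' -> eqm N (- p) (- p').
Proof. by move=> h1 i hi; rewrite !coefN h1. Qed.
Lemma eqmB N p q p' q' : eqm N p p' -> eqm N q q' -> eqm N (p - q) (p' - q').
Proof. by move=> h1 h2; apply: eqmD => //; apply: eqmN. Qed.
Lemma eqmM N p q p' q' : eqm N p p' -> eqm N q q' -> eqm N (p * q) (p' * q').
Proof.
move=> h1 h2 i hi; rewrite !coefM; apply: eq_bigr => j _.
have hj : (j < N)%N by apply: leq_ltn_trans hi; rewrite -ltnS.
by rewrite h1 // h2 // (leq_ltn_trans (leq_subr _ _) hi).
Qed.
Lemma eqmX N p p' k : eqm N p p' -> eqm N (p ^+ k) (p' ^+ k).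
Proof. move=> h; elim: k => [|k IH]; first exact: eqm_refl.
by rewrite !exprS; apply: eqmM. Qed.
Lemma eqm_le N M p q : (M <= N)%N -> eqm N p q -> eqm M p q.
Proof. by move=> hMN h i hi; apply: h; apply: leq_trans hMN. Qed.

Lemma eqm_ex N p q : eqm N p q -> exists r, p - q = r * 'X^N.
Proof.
move=> h; exists (drop_poly N (p - q)).
rewrite -{1}(poly_take_drop N (p - q)).
suff -> : take_poly N (p - q) = 0 by rewrite add0r.
apply/polyP=> i; rewrite coef_take_poly coef0 coefB.
by case: ifP => // hi; rewrite h // subrr.
Qed.

Lemma eqm_of_ex N p q r : p - q = r * 'X^N -> eqm N p q.
Proof.
move=> h i hi; apply/eqP; rewrite -subr_eq0 -coefB h coefMXn hi //.
Qed.

Lemma const0_X (q : P2) : q`_0 = 0 -> q = drop_poly 1 q * 'X.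
Proof.
move=> h; rewrite -{1}(poly_take_drop 1 q).
suff -> : take_poly 1 q = 0 by rewrite add0r expr1.
apply/polyP=> i; rewrite coef_take_poly coef0; case: i => //= _; exact: h.
Qed.

Lemma eqm_compl N (p p' q : P2) : q`_0 = 0 -> eqm N p p' -> eqm N (p \Po q) (p' \Po q).
Proof.
move=> hq /eqm_ex [r hr]; apply: (@eqm_of_ex _ _ _ ((r \Po q) * (drop_poly 1 q) ^+ N)).
rewrite -comp_polyB hr comp_polyM comp_Xn_poly {2}(const0_X hq).
by rewrite exprMn mulrA.
Qed.

Lemma eqm_compr N (p q q' : P2) : eqm N q q' -> eqm N (p \Po q) (p \Po q').
Proof.
move=> h i hi; rewrite !coef_comp_poly; apply: eq_bigr => j _.
by rewrite (eqmX j h).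
Qed.

Lemma eqm_comp N (p p' q q' : P2) : q`_0 = 0 -> eqm N p p' -> eqm N q q' ->
  eqm N (p \Po q) (p' \Po q').
Proof.
move=> hq h1 h2; apply: eqm_trans (eqm_compl hq h1) _; exact: eqm_compr.
Qed.

Lemma eqm_cancel N (p u : P2) : u`_0 != 0 -> eqm N (p * u) 0 -> eqm N p 0.
Proof.
move=> hu h i; elim: i {-2}i (leqnn i) => [|n IH] i.
  rewrite leqn0 => /eqP -> h0; move: (h 0%N h0).
  rewrite coefM big_ord1 coef0 subnn => /eqP; rewrite mulf_eq0 (negbTE hu) orbF.
  by move/eqP.
rewrite leq_eqVlt => /orP [/eqP -> hlt|]; last by move=> ?; apply: IH.
move: (h _ hlt); rewrite coefM big_ord_recr /= subnn coef0.
rewrite big1 ?add0r; last first.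
  move=> j _; rewrite (IH j) ?coef0 ?mul0r //.
    by rewrite -ltnS.
  by apply: ltn_trans hlt.
by move/eqP; rewrite mulf_eq0 (negbTE hu) orbF => /eqP.
Qed.

Lemma two0 : (2%:R : P2) = 0.
Proof. by rewrite -polyC_natr; have -> : (2%:R : 'F_2) = 0 by apply/val_inj. Qed.

Lemma addpp (p : P2) : p + p = 0.
Proof. by rewrite -mulr2n -mulr_natl two0 mul0r. Qed.

Lemma oppp (p : P2) : - p = p.
Proof. by rewrite -[LHS]addr0 -(addpp p) addrA addNr add0r. Qed.

Lemma F2_cases (x : 'F_2) : x = 0 \/ x = 1.
Proof. by case: x => [[|[|]]]//= ?; [left|right]; apply/val_inj. Qed.

Lemma sqr_comp (p : P2) : p ^+ 2 = p \Po 'X^2.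
Proof.
elim/poly_ind: p => [|p c IH]; first by rewrite comp_poly0 expr0n.
rewrite comp_polyD comp_polyC comp_polyM comp_polyX -IH.
have hc : c ^+ 2 = c by case: (F2_cases c) => ->; rewrite ?expr0n ?expr1n.
have -> : (p * 'X + c%:P) ^+ 2 = p ^+ 2 * 'X ^+ 2 + (c ^+ 2)%:P + 2%:R * (p * 'X * c%:P).
  by rewrite polyC_exp; ring.
by rewrite two0 mul0r addr0 hc.
Qed.


Lemma s2_wide m n : (n <= m)%N -> (\sum_(i < m) (n %/ 2 ^ i %% 2))%N = s2 n.
Proof.
move=> hnm; rewrite /s2 -!(big_mkord xpredT (fun i => n %/ 2 ^ i %% 2)%N).
rewrite (big_cat_nat (leq0n n) hnm) /=.
rewrite [X in (_ + X)%N]big_nat_cond [X in (_ + X)%N]big1 ?addn0 //.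
move=> i /andP [/andP [hi _] _]; rewrite divn_small ?mod0n //.
apply: leq_trans (ltn_expl n (isT : (1 < 2)%N)) _; exact: leq_pexp2l.
Qed.

Lemma s2_even n : s2 n.*2 = s2 n.
Proof.
case: n => [|n]; first by rewrite /s2 big_ord0.
rewrite -[in RHS](s2_wide (m := n.*2.+1)); last by rewrite ltnS -addnn leq_addr.
rewrite {1}/s2 (_ : (n.+1).*2 = (n.*2.+1).+1) // big_ord_recl /=.
rewrite expn0 divn1 -doubleS modn2 odd_double add0n; apply: eq_bigr => i _.
by rewrite /bump /= add1n expnS divnMA -muln2 mulnK.
Qed.

Lemma s2_odd n : s2 n.*2.+1 = (s2 n).+1.
Proof.
rewrite -[in RHS](s2_wide (m := n.*2)); last by rewrite -addnn leq_addr.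
rewrite {1}/s2 big_ord_recl /= expn0 divn1 modn2 /= odd_double add1n.
congr (_.+1); apply: eq_bigr => i _.
rewrite /bump /= add1n expnS divnMA; congr (_ %/ _ %% _)%N.
by rewrite -addn1 -muln2 divnMDl // divn_small // addn0.
Qed.

Definition tau (n : nat) : 'F_2 := (tm n)%:R.

Lemma tauE n : tau n = (s2 n)%:R.
Proof. by rewrite /tau /tm Fp_nat_mod. Qed.

Lemma tau_even n : tau n.*2 = tau n.
Proof. by rewrite !tauE s2_even. Qed.
Lemma tau_odd n : tau n.*2.+1 = tau n + 1.
Proof. by rewrite !tauE s2_odd mulrSr. Qed.


Definition Sone (L : nat) : P2 := \poly_(i < L) 1.

Lemma F_split L : eqm L (Ftrunc L)
  ((Ftrunc L \Po 'X^2) + 'X * (Ftrunc L \Po 'X^2) + 'X * (Sone L \Po 'X^2)).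
Proof.
move=> i hi; rewrite !coefD !coefXM !coef_comp_poly_Xn // /Ftrunc /Sone !coef_poly hi.
move: hi; have := odd_double_half i; move: (i./2) => j.
have hj : forall b : bool, (b + j.*2 < L)%N -> (j < L)%N.
  move=> b h; apply: leq_ltn_trans h; rewrite -addnn addnA leq_addl //.
case: (odd i) => /= <- hi; [have {}hj := hj true hi| have {}hj := hj false hi]; rewrite -/(tau _).
  rewrite add1n /= !dvdn2 /= !odd_double /= !divn2 !doubleK hj.
  by rewrite tau_odd add0r.
rewrite add0n !dvdn2 !odd_double /= !divn2 !doubleK hj tau_even.
case: j {hi hj} => [|j] /=; first by rewrite !addr0 /tau.
by rewrite odd_double /= !addr0.
Qed.

Lemma Sone_inv L : eqm L ((1 + 'X) * Sone L) 1.
Proof.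
move=> i hi; rewrite mulrDl mul1r coefD coefXM /Sone !coef_poly hi coef1.
case: i hi => [|i] hi /=; first by rewrite addr0.
by rewrite (ltn_trans (ltnSn i) hi); apply/val_inj.
Qed.

Lemma E1 L : eqm L ((1 + 'X) ^+ 2 * Ftrunc L) ((1 + 'X) ^+ 3 * (Ftrunc L) ^+ 2 + 'X).
Proof.
have h := @F_split L; rewrite -!sqr_comp in h.
apply: eqm_trans (eqmM (@eqm_refl L ((1 + 'X) ^+ 2)) h) _.
have -> : (1 + 'X) ^+ 2 * ((Ftrunc L) ^+ 2 + 'X * (Ftrunc L) ^+ 2 + 'X * (Sone L) ^+ 2)
  = (1 + 'X) ^+ 3 * (Ftrunc L) ^+ 2 + 'X * ((1 + 'X) * Sone L) ^+ 2 by ring.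
apply: eqmD; first exact: eqm_refl.
apply: eqm_trans (eqmM (@eqm_refl _ 'X) (eqmX 2 (@Sone_inv L))) _.
rewrite expr1n mulr1; exact: eqm_refl.
Qed.

Lemma comp_polyXn' (p q : P2) n : (p ^+ n) \Po q = (p \Po q) ^+ n.
Proof. elim: n => [|n IH]; first by rewrite !expr0 comp_polyC.
by rewrite !exprS comp_polyM IH. Qed.

Lemma comp_poly1' (q : P2) : 1 \Po q = 1.
Proof. by rewrite -polyC1 comp_polyC. Qed.

Lemma comp_test (p q C : P2) : (p * q + 1 + p ^+ 3) \Po C = (p \Po C) * (q \Po C) + 1 + (p \Po C) ^+ 3.
Proof. by rewrite !comp_polyD !comp_polyXn' !comp_polyM comp_poly1'. Qed.

Lemma ser0 (c : nat -> 'F_2) L : c 0%N = 0 -> (ser_trunc c L)`_0 = 0.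
Proof. by move=> h; rewrite /ser_trunc coef_poly; case: ifP. Qed.

Lemma compC (c : nat -> 'F_2) L : c 0%N = 0 ->
  (forall n : nat, (Ftrunc n.+1 \Po ser_trunc c n.+1)`_n = (n == 1%N)%:R) ->
  eqm L (Ftrunc L \Po ser_trunc c L) 'X.
Proof.
move=> h0 h n hn; rewrite coefX -h.
have e : eqm n.+1 (Ftrunc L \Po ser_trunc c L) (Ftrunc n.+1 \Po ser_trunc c n.+1).
  apply: eqm_comp; first exact: ser0.
    by move=> i hi; rewrite /Ftrunc !coef_poly hi (leq_trans hi hn).
  by move=> i hi; rewrite /ser_trunc !coef_poly hi (leq_trans hi hn).
exact: e.
Qed.

Lemma E2C (c : nat -> 'F_2) L : c 0%N = 0 ->
  (forall n : nat, (Ftrunc n.+1 \Po ser_trunc c n.+1)`_n = (n == 1%N)%:R) ->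
  eqm L ((1 + ser_trunc c L) ^+ 2 * 'X) ((1 + ser_trunc c L) ^+ 3 * 'X ^+ 2 + ser_trunc c L).
Proof.
move=> h0 h; set C := ser_trunc c L.
have hC : C`_0 = 0 by exact: ser0.
have e := eqm_compl hC (@E1 L).
rewrite !(comp_polyD, comp_polyXn', comp_polyM, comp_poly1', comp_polyX) in e.
have hF := compC (L := L) h0 h.
apply: eqm_trans (eqm_trans (eqm_sym (eqmM (@eqm_refl _ ((1 + C) ^+ 2)) hF)) e) _.
apply: eqmD; last exact: eqm_refl.
apply: eqmM; [exact: eqm_refl | exact: eqmX].
Qed.


Lemma b_lt (b : nat -> nat)
  (hbe : forall n : nat, b n.*2 = (4 * b n)%N)
  (hbo : forall n : nat, b n.*2.+1 = (4 * b n + 2)%N) n : (b n < b n.+1)%N.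
Proof.
elim/ltn_ind: n => n IH.
move: IH; have := odd_double_half n; move: (n./2) => j.
case: odd => /= <- IH.
  rewrite add1n -doubleS hbe hbo.
  have : (b j < b j.+1)%N by apply: IH; rewrite add1n ltnS -addnn leq_addr.
  lia.
rewrite add0n hbe hbo; lia.
Qed.

Lemma b_mono (b : nat -> nat)
  (hbe : forall n : nat, b n.*2 = (4 * b n)%N)
  (hbo : forall n : nat, b n.*2.+1 = (4 * b n + 2)%N) m n : (m < n)%N -> (b m < b n)%N.
Proof.
elim: n => [//|n IH]; rewrite ltnS leq_eqVlt => /orP [/eqP ->|h].
  exact: b_lt.
exact: ltn_trans (IH h) (b_lt hbe hbo n).
Qed.

Lemma b_ge (b : nat -> nat)
  (hbe : forall n : nat, b n.*2 = (4 * b n)%N)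
  (hbo : forall n : nat, b n.*2.+1 = (4 * b n + 2)%N) k : (k <= b k)%N.
Proof.
elim: k => [//|k IH]; exact: leq_ltn_trans IH (b_lt hbe hbo k).
Qed.

Definition Bp (b : nat -> nat) M : P2 := \sum_(k < M) 'X^(b k).

Lemma Bp_double (b : nat -> nat)
  (hbe : forall n : nat, b n.*2 = (4 * b n)%N)
  (hbo : forall n : nat, b n.*2.+1 = (4 * b n + 2)%N) M :
  Bp b M.*2 = (1 + 'X^2) * (Bp b M \Po 'X^4).
Proof.
elim: M => [|M IH]; first by rewrite /Bp !big_ord0 comp_poly0 mulr0.
rewrite doubleS /Bp !big_ord_recr /= -/(Bp b M.*2) -/(Bp b M) IH hbe hbo.
rewrite comp_polyD mulrDr comp_Xn_poly -exprM exprD.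
by rewrite [(1 + 'X^2) * 'X^(4 * b M)]mulrDl mul1r addrA [X in _ = _ + X]mulrC.
Qed.

Lemma Bp_ext (b : nat -> nat)
  (hbe : forall n : nat, b n.*2 = (4 * b n)%N)
  (hbo : forall n : nat, b n.*2.+1 = (4 * b n + 2)%N) M d :
  eqm M (Bp b (M + d)) (Bp b M).
Proof.
elim: d => [|d IH]; first by rewrite addn0; exact: eqm_refl.
rewrite addnS /Bp big_ord_recr /= -/(Bp b (M + d)).
move=> i hi; rewrite coefD IH // coefXn.
suff -> : (i == b (M + d)) = false by rewrite addr0.
apply/negbTE; rewrite neq_ltn; apply/orP; left.
apply: leq_trans hi (leq_trans (leq_addr d M) (b_ge hbe hbo _)).
Qed.

Lemma pow4 (p : P2) : p ^+ 4 = p \Po 'X^4.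
Proof.
change (p ^+ (2 * 2) = p \Po 'X^(2 * 2)).
by rewrite exprM (sqr_comp (p ^+ 2)) (sqr_comp p) -comp_polyA comp_Xn_poly -exprM.
Qed.

Lemma B1 (b : nat -> nat)
  (hbe : forall n : nat, b n.*2 = (4 * b n)%N)
  (hbo : forall n : nat, b n.*2.+1 = (4 * b n + 2)%N) M :
  eqm M (Bp b M) ((1 + 'X^2) * (Bp b M) ^+ 4).
Proof.
rewrite pow4 -(Bp_double hbe hbo) -addnn; apply: eqm_sym; exact: Bp_ext.
Qed.

Lemma Bp0 (b : nat -> nat) (hb0 : b 0%N = 0%N)
  (hbe : forall n : nat, b n.*2 = (4 * b n)%N)
  (hbo : forall n : nat, b n.*2.+1 = (4 * b n + 2)%N) M :
  (Bp b M.+1)`_0 = 1.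
Proof.
rewrite /Bp big_ord_recl coefD hb0 coefXn /= coef_sum big1 ?addr0 //.
move=> k _; rewrite coefXn.
have := b_ge hbe hbo (bump 0 k); case: (b (bump 0 k)) => //.
Qed.

Lemma Binv (b : nat -> nat) (hb0 : b 0%N = 0%N)
  (hbe : forall n : nat, b n.*2 = (4 * b n)%N)
  (hbo : forall n : nat, b n.*2.+1 = (4 * b n + 2)%N) M :
  eqm M.+1 ((1 + 'X^2) * (Bp b M.+1) ^+ 3) 1.
Proof.
set B := Bp b M.+1.
have h : eqm M.+1 ((1 - (1 + 'X^2) * B ^+ 3) * B) 0.
  have -> : (1 - (1 + 'X^2) * B ^+ 3) * B = B - (1 + 'X^2) * B ^+ 4 by ring.
  have := eqmB (B1 (M:=M.+1) hbe hbo) (@eqm_refl M.+1 ((1 + 'X^2) * B ^+ 4)).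
  by rewrite subrr.
have := eqm_cancel _ h; rewrite /B Bp0 // oner_neq0 => /(_ isT) h2.
move=> i hi; move: (h2 i hi); rewrite coefB coef0 => /eqP; rewrite subr_eq0 => /eqP.
by move=> <-.
Qed.


Definition Q3 : P2 := 1 + 'X + 'X^2 + 'X^3.

Lemma cube1X : (1 + 'X) ^+ 3 = Q3 :> P2.
Proof.
have -> : (1 + 'X) ^+ 3 = Q3 + 2%:R * ('X + 'X^2) :> P2 by rewrite /Q3; ring.
by rewrite two0 mul0r addr0.
Qed.

Lemma sqr1X : (1 + 'X) ^+ 2 = 1 + 'X^2 :> P2.
Proof.
have -> : (1 + 'X) ^+ 2 = 1 + 'X^2 + 2%:R * 'X :> P2 by ring.
by rewrite two0 mul0r addr0.
Qed.

Definition Hp (b : nat -> nat) L : P2 := \sum_(k < L) 'X^((4 * b k.+1).-1) * Q3.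
Definition Gp (b : nat -> nat) L : P2 := 'X + 'X^2 + Hp b L.

Lemma ZG (b : nat -> nat) (hb0 : b 0%N = 0%N)
  (hbe : forall n : nat, b n.*2 = (4 * b n)%N)
  (hbo : forall n : nat, b n.*2.+1 = (4 * b n + 2)%N) L :
  'X * (1 + Gp b L) = 1 + Q3 * (Bp b L.+1 \Po 'X^4).
Proof.
elim: L => [|L IH].
  rewrite /Gp /Hp /Bp big_ord0 big_ord1 hb0 expr0 comp_poly1' addr0 mulr1 /Q3.
  have -> : 'X * (1 + ('X + 'X^2)) = 1 + (1 + 'X + 'X^2 + 'X^3) - 2%:R * (1 : P2) by ring.
  by rewrite two0 mul0r subr0.
have -> : 'X * (1 + Gp b L.+1) = 'X * (1 + Gp b L) + 'X * 'X^((4 * b L.+1).-1) * Q3.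
  by rewrite /Gp /Hp big_ord_recr /=; ring.
rewrite IH /Bp [in RHS]big_ord_recr /= -/(Bp b L.+1) comp_polyD comp_Xn_poly -exprM.
rewrite -exprS prednK; first by ring.
have := b_ge hbe hbo L.+1; lia.
Qed.

Lemma eqmX1 M (T : P2) : eqm M T 0 -> eqm M.+1 ('X * T) 0.
Proof.
move=> h i hi; rewrite coefXM coef0; case: i hi => [|i] hi /=; [by [] | by rewrite (h i hi) coef0].
Qed.


Lemma eqm_unX2 N (E : P2) : eqm N.+2 ('X^2 * E) 0 -> eqm N E 0.
Proof.
move=> h i hi; have := h i.+2 hi; rewrite coefXnM /= subn2 /= !coef0 => -> //.
Qed.

Lemma E2G (b : nat -> nat) (hb0 : b 0%N = 0%N)
  (hbe : forall n : nat, b n.*2 = (4 * b n)%N)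
  (hbo : forall n : nat, b n.*2.+1 = (4 * b n + 2)%N) L :
  eqm L ((1 + Gp b L) ^+ 2 * 'X) ((1 + Gp b L) ^+ 3 * 'X ^+ 2 + Gp b L).
Proof.
set G := Gp b L; set B := Bp b L.+1.
set Y := Q3 * (B \Po 'X^4).
have hY : Y = (1 + 'X) ^+ 3 * B ^+ 4 by rewrite /Y cube1X (pow4 B).
have hY3 : eqm L.+1 (Y ^+ 3) (1 + 'X).
  have -> : Y ^+ 3 = (1 + 'X) * (((1 + 'X) ^+ 2) * B ^+ 3) ^+ 4 by rewrite hY; ring.
  rewrite sqr1X -[X in eqm _ _ X]mulr1 -[X in eqm _ _ (_ * X)](expr1n _ 4).
  apply: eqmM; first exact: eqm_refl.
  exact: eqmX (Binv (M:=L) hb0 hbe hbo).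
set Z := 1 + Y.
have hZ : eqm L.+1 (Z ^+ 3 + Z ^+ 2 + Z + 'X) 0.
  have -> : Z ^+ 3 + Z ^+ 2 + Z + 'X = (Y ^+ 3 - (1 + 'X)) + 2%:R * (2%:R + 3%:R * Y + 2%:R * Y ^+ 2 + 'X).
    by rewrite /Z; ring.
  rewrite two0 mul0r addr0 -(subrr (1 + 'X)); apply: eqmB => //; exact: eqm_refl.
have hZG : Z = 'X * (1 + G) by rewrite /Z /Y /G ZG.
apply/eqm_sym; apply/eqm_sym.
suff h : eqm L ((1 + G) ^+ 2 * 'X - ((1 + G) ^+ 3 * 'X ^+ 2 + G)) 0.
  move=> i hi; move: (h i hi); rewrite coefB coef0 => /eqP; rewrite subr_eq0 => /eqP //.
apply: eqm_unX2.
have -> : 'X^2 * ((1 + G) ^+ 2 * 'X - ((1 + G) ^+ 3 * 'X ^+ 2 + G)) =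
  'X * (Z ^+ 3 + Z ^+ 2 + Z + 'X) - 2%:R * ('X * (Z ^+ 3 + Z)).
  by rewrite hZG; ring.
rewrite two0 mul0r subr0; exact: eqmX1.
Qed.

Lemma eqm_sub0 L (p q : P2) : eqm L p q -> eqm L (p - q) 0.
Proof. by move=> h i hi; rewrite coefB h // subrr coef0. Qed.

Lemma uniq_sol L (C G : P2) :
  eqm L ((1 + C) ^+ 2 * 'X) ((1 + C) ^+ 3 * 'X ^+ 2 + C) ->
  eqm L ((1 + G) ^+ 2 * 'X) ((1 + G) ^+ 3 * 'X ^+ 2 + G) ->
  eqm L C G.
Proof.
move=> hC hG.
set U := 'X * (2%:R + C + G) - 'X ^+ 2 * (3%:R + 3%:R * C + 3%:R * G + C ^+ 2 + C * G + G ^+ 2) - 1.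
have hU : U`_0 != 0.
  by rewrite /U !coefB coefXM coefXnM /= coef1.
have h : eqm L ((C - G) * U) 0.
  have -> : (C - G) * U = ((1 + C) ^+ 2 * 'X - ((1 + C) ^+ 3 * 'X ^+ 2 + C))
     - ((1 + G) ^+ 2 * 'X - ((1 + G) ^+ 3 * 'X ^+ 2 + G)) by rewrite /U; ring.
  have := eqmB (eqm_sub0 hC) (eqm_sub0 hG); by rewrite subr0.
move: (eqm_cancel hU h) => h2 i hi; move: (h2 i hi); rewrite coefB coef0 => /eqP; rewrite subr_eq0 => /eqP //.
Qed.


Lemma cG (c : nat -> 'F_2) (b : nat -> nat) (hc : is_comp_inverse c)
  (hb0 : b 0%N = 0%N)
  (hbe : forall n : nat, b n.*2 = (4 * b n)%N)
  (hbo : forall n : nat, b n.*2.+1 = (4 * b n + 2)%N) L i :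
  (i < L)%N -> c i = (Gp b L)`_i.
Proof.
case: hc => [h0 [h1 _]] hi.
have := uniq_sol (E2C (L := L) h0 h1) (E2G (L := L) hb0 hbe hbo).
by move/(_ i hi); rewrite /ser_trunc coef_poly hi.
Qed.

Lemma coefQ3 j : Q3`_j = (j < 4)%N%:R.
Proof.
rewrite /Q3 !coefD coef1 coefX !coefXn.
by case: j => [|[|[|[|j]]]] /=; rewrite ?addr0 ?add0r.
Qed.

Lemma coefGp (b : nat -> nat) L i : (Gp b L)`_i =
  (i == 1)%N%:R + (i == 2)%N%:R +
  \sum_(k < L) (((4 * b k.+1).-1 <= i) && (i < (4 * b k.+1).-1 + 4))%N%:R.
Proof.
rewrite /Gp /Hp !coefD coefX coefXn coef_sum; congr (_ + _).
apply: eq_bigr => k _; rewrite coefXnM coefQ3.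
case: ltnP => h /=; first by [].
set e := (4 * b k.+1).-1; move: h; rewrite -/e => h.
by have -> : (i - e < 4)%N = (i < e + 4)%N by apply/idP/idP; lia.
Qed.

Definition inblk (b : nat -> nat) k i :=
  (((4 * b k.+1).-1 <= i) && (i < (4 * b k.+1).-1 + 4))%N.

Lemma blk_excl (b : nat -> nat)
  (hbe : forall n : nat, b n.*2 = (4 * b n)%N)
  (hbo : forall n : nat, b n.*2.+1 = (4 * b n + 2)%N) k k' i :
  inblk b k i -> inblk b k' i -> k = k'.
Proof.
rewrite /inblk => /andP [h1 h2] /andP [h3 h4].
have := b_ge hbe hbo k.+1; have := b_ge hbe hbo k'.+1.
case: (ltngtP k k') => // hk.
  have := b_mono hbe hbo (m:=k.+1) (n:=k'.+1) hk; lia.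
have := b_mono hbe hbo (m:=k'.+1) (n:=k.+1) hk; lia.
Qed.

Lemma c_blk (c : nat -> 'F_2) (b : nat -> nat) (hc : is_comp_inverse c)
  (hb0 : b 0%N = 0%N)
  (hbe : forall n : nat, b n.*2 = (4 * b n)%N)
  (hbo : forall n : nat, b n.*2.+1 = (4 * b n + 2)%N) k0 j :
  (j < 4)%N -> c ((4 * b k0.+1).-1 + j)%N = 1.
Proof.
move=> hj; set i := ((4 * b k0.+1).-1 + j)%N.
have hb := b_ge hbe hbo k0.+1.
rewrite (cG hc hb0 hbe hbo (L := i.+1)) // coefGp.
have hk0 : (k0 < i.+1)%N by rewrite /i; lia.
rewrite (bigD1 (Ordinal hk0)) //= big1.
  have -> : (i == 1)%N = false by apply/negbTE; rewrite /i; apply/eqP; lia.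
  have -> : (i == 2)%N = false by apply/negbTE; rewrite /i; apply/eqP; lia.
  have -> : (((4 * b k0.+1).-1 <= i) && (i < (4 * b k0.+1).-1 + 4))%N = true.
    by apply/andP; split; rewrite /i; lia.
  by rewrite /= !add0r addr0.
move=> k hk; have : inblk b k i = false.
  apply/negP => hin; move: hk; rewrite -(inj_eq val_inj) /=.
  rewrite (blk_excl hbe hbo hin (k' := k0)) ?eqxx //.
  by rewrite /inblk /i; apply/andP; split; lia.
by rewrite /inblk => ->.
Qed.

Lemma c_none (c : nat -> 'F_2) (b : nat -> nat) (hc : is_comp_inverse c)
  (hb0 : b 0%N = 0%N)
  (hbe : forall n : nat, b n.*2 = (4 * b n)%N)
  (hbo : forall n : nat, b n.*2.+1 = (4 * b n + 2)%N) i :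
  (forall k, (k <= i)%N -> inblk b k i = false) ->
  c i = (i == 1)%N%:R + (i == 2)%N%:R.
Proof.
move=> h; rewrite (cG hc hb0 hbe hbo (L := i.+1)) // coefGp big1 ?addr0 //.
by move=> k _; rewrite -/(inblk b k i) h // -ltnS.
Qed.

Lemma c_one (c : nat -> 'F_2) (b : nat -> nat) (hc : is_comp_inverse c)
  (hb0 : b 0%N = 0%N)
  (hbe : forall n : nat, b n.*2 = (4 * b n)%N)
  (hbo : forall n : nat, b n.*2.+1 = (4 * b n + 2)%N) i :
  (i == 1)%N || (i == 2)%N -> c i = 1.
Proof.
move=> hi; rewrite (c_none hc hb0 hbe hbo).
  by case/orP: hi => /eqP -> /=; rewrite ?addr0 ?add0r.
move=> k _; apply/negbTE; rewrite /inblk; have := b_ge hbe hbo k.+1.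
case/orP: hi => /eqP -> ?; apply/negP => /andP []; lia.
Qed.

Lemma c_gap (c : nat -> 'F_2) (b : nat -> nat) (hc : is_comp_inverse c)
  (hb0 : b 0%N = 0%N)
  (hbe : forall n : nat, b n.*2 = (4 * b n)%N)
  (hbo : forall n : nat, b n.*2.+1 = (4 * b n + 2)%N) k i :
  (4 * b k + 3 <= i)%N -> (i < (4 * b k.+1).-1)%N -> c i = 0.
Proof.
move=> h1 h2; rewrite (c_none hc hb0 hbe hbo).
  have -> : (i == 1)%N = false by apply/negbTE; apply/eqP; lia.
  have -> : (i == 2)%N = false by apply/negbTE; apply/eqP; lia.
  by rewrite addr0.
move=> k' _; apply/negbTE; rewrite /inblk; apply/negP => /andP [h3 h4].
have := b_ge hbe hbo k'.+1; have := b_ge hbe hbo k.+1.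
case: (ltngtP k' k) => hk.
- have : (b k'.+1 <= b k)%N.
    move: hk; rewrite leq_eqVlt => /orP [/eqP -> //|h].
    exact: ltnW (b_mono hbe hbo h).
  lia.
- have := b_mono hbe hbo (m:=k.+1) (n:=k'.+1) hk; lia.
- rewrite hk in h3; lia.
Qed.


Definition cnt (c : nat -> 'F_2) m := (\sum_(i < m) ((1 <= i) && (c i == 1%R)))%N.

Lemma cnt_card (c : nat -> 'F_2) m :
  #|[set i : 'I_m | (1 <= (i : nat))%N && (c i == 1)]| = cnt c m.
Proof.
rewrite cardsE -sum1_card /cnt big_mkcond /=; apply: eq_bigr => i _.
by rewrite unfold_in; case: (_ && _).
Qed.

Lemma cntS (c : nat -> 'F_2) m : cnt c m.+1 = (cnt c m + ((1 <= m) && (c m == 1%R)))%N.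
Proof. by rewrite /cnt big_ord_recr. Qed.

Lemma cnt_ones (c : nat -> 'F_2) a d : (1 <= a)%N ->
  (forall i, (a <= i < a + d)%N -> c i = 1) -> cnt c (a + d) = (cnt c a + d)%N.
Proof.
move=> ha h; elim: d h => [|d IH] h; first by rewrite !addn0.
rewrite addnS cntS IH; last by move=> i /andP [h1 h2]; apply: h; rewrite h1 /=; lia.
rewrite h; last by apply/andP; split; lia.
rewrite eqxx (leq_trans ha (leq_addr _ _)) /=; lia.
Qed.

Lemma cnt_zeros (c : nat -> 'F_2) a d :
  (forall i, (a <= i < a + d)%N -> c i = 0) -> cnt c (a + d) = cnt c a.
Proof.
elim: d => [|d IH] h; first by rewrite !addn0.
rewrite addnS cntS IH; last by move=> i /andP [h1 h2]; apply: h; rewrite h1 /=; lia.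
rewrite h; last by apply/andP; split; lia.
by rewrite andbF addn0.
Qed.

Lemma cnt_blk (c : nat -> 'F_2) (b : nat -> nat) (hc : is_comp_inverse c)
  (hb0 : b 0%N = 0%N)
  (hbe : forall n : nat, b n.*2 = (4 * b n)%N)
  (hbo : forall n : nat, b n.*2.+1 = (4 * b n + 2)%N) k :
  cnt c (4 * b k + 3) = (4 * k + 2)%N.
Proof.
elim: k => [|k IH].
  rewrite hb0 /= (cnt_ones (a := 1) (d := 2)) //.
    by rewrite /cnt big_ord1.
  by move=> i hi; apply: (c_one hc hb0 hbe hbo); apply/orP; lia.
have hbk := b_lt hbe hbo k; have hb1 := b_ge hbe hbo k.+1.
set e := (4 * b k.+1).-1.
have -> : (4 * b k.+1 + 3 = e + 4)%N by rewrite /e; lia.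
rewrite cnt_ones; last first.
- move=> i hi; have -> : i = (e + (i - e))%N by lia.
  apply: (c_blk hc hb0 hbe hbo); lia.
- rewrite /e; lia.
have -> : e = (4 * b k + 3 + (e - (4 * b k + 3)))%N by rewrite /e; lia.
rewrite cnt_zeros ?IH; first lia.
move=> i hi; apply: (c_gap hc hb0 hbe hbo (k := k)); rewrite -/e; lia.
Qed.

Lemma cnt_in (c : nat -> 'F_2) (b : nat -> nat) (hc : is_comp_inverse c)
  (hb0 : b 0%N = 0%N)
  (hbe : forall n : nat, b n.*2 = (4 * b n)%N)
  (hbo : forall n : nat, b n.*2.+1 = (4 * b n + 2)%N) k j :
  (j <= 4)%N -> cnt c ((4 * b k.+1).-1 + j) = (4 * k + 2 + j)%N.
Proof.
move=> hj.
have hbk := b_lt hbe hbo k; have hb1 := b_ge hbe hbo k.+1.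
set e := (4 * b k.+1).-1.
rewrite cnt_ones; last first.
- move=> i hi; have -> : i = (e + (i - e))%N by lia.
  apply: (c_blk hc hb0 hbe hbo); lia.
- rewrite /e; lia.
have -> : e = (4 * b k + 3 + (e - (4 * b k + 3)))%N by rewrite /e; lia.
rewrite cnt_zeros ?(cnt_blk hc hb0 hbe hbo) //.
move=> i hi; apply: (c_gap hc hb0 hbe hbo (k := k)); rewrite -/e; lia.
Qed.

Lemma enum_blk (c : nat -> 'F_2) (b : nat -> nat) (hc : is_comp_inverse c)
  (hb0 : b 0%N = 0%N)
  (hbe : forall n : nat, b n.*2 = (4 * b n)%N)
  (hbo : forall n : nat, b n.*2.+1 = (4 * b n + 2)%N) k j :
  (j < 4)%N -> enum_at c ((4 * k.+1).-1 + j) ((4 * b k.+1).-1 + j).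
Proof.
move=> hj; have hb1 := b_ge hbe hbo k.+1.
rewrite /enum_at; have -> : ((4 * k.+1).-1 + j == 0)%N = false by apply/negbTE; apply/eqP; lia.
split.
- lia.
- exact: (c_blk hc hb0 hbe hbo).
- rewrite cnt_card (cnt_in hc hb0 hbe hbo); [lia | lia].
Qed.

Lemma enum_small (c : nat -> 'F_2) (b : nat -> nat) (hc : is_comp_inverse c)
  (hb0 : b 0%N = 0%N)
  (hbe : forall n : nat, b n.*2 = (4 * b n)%N)
  (hbo : forall n : nat, b n.*2.+1 = (4 * b n + 2)%N) j :
  (j < 3)%N -> enum_at c j j.
Proof.
have c1 : c 1%N = 1 := c_one hc hb0 hbe hbo (i:=1) isT.
case: j => [|[|[|]]] // _; rewrite /enum_at cnt_card /=; split => //.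
- by rewrite /cnt big_ord1.
- by apply: (c_one hc hb0 hbe hbo (i:=2)).
- by rewrite /cnt !big_ord_recr big_ord0 /= c1.
Qed.


Unset Implicit Arguments.

Theorem mainTheorem5 (c : nat -> 'F_2) (b : nat -> nat)
  (hc : is_comp_inverse c)
  (hb0 : b 0%N = 0%N)
  (hbe : forall n : nat, b n.*2 = (4 * b n)%N)
  (hbo : forall n : nat, b n.*2.+1 = (4 * b n + 2)%N)
  (k : nat) (r : int) (hr : r \in [:: -1; 0; 1; 2])
  (hkr : 0 <= (4 * k)%:Z + r) :
  0 <= (4 * b k)%:Z + r /\
  enum_at c (absz ((4 * k)%:Z + r)) (absz ((4 * b k)%:Z + r)).
Proof.
have hbg := b_ge hbe hbo k.
case: k hkr hbg => [|k0] hkr hbg.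
  rewrite hb0.
  move: hr; rewrite !inE => /or4P [] /eqP hr; subst r.
  - by move: hkr.
  - by split => //; apply: (enum_small hc hb0 hbe hbo).
  - by split => //; apply: (enum_small hc hb0 hbe hbo).
  - by split => //; apply: (enum_small hc hb0 hbe hbo).
have hq : forall j : nat, (j < 4)%N ->
    (4 * k0.+1)%:Z + (j%:Z - 1) = ((4 * k0.+1).-1 + j)%N%:Z /\
    (4 * b k0.+1)%:Z + (j%:Z - 1) = ((4 * b k0.+1).-1 + j)%N%:Z.
  move=> j hj; split; lia.
have key : forall j : nat, (j < 4)%N -> r = j%:Z - 1 -> 0 <= (4 * b k0.+1)%:Z + r /\
  enum_at c (absz ((4 * k0.+1)%:Z + r)) (absz ((4 * b k0.+1)%:Z + r)).
  move=> j hj ->; have [-> ->] := hq j hj; split; first by [].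
  exact: (enum_blk hc hb0 hbe hbo).
move: hr; rewrite !inE => /or4P [] /eqP hr.
- by apply: (key 0%N).
- by apply: (key 1%N).
- by apply: (key 2%N).
- by apply: (key 3%N).
Qed.
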